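(* The collection $\{\mathcal H_X^*\}_{X\in Ob(\mathscr C)}$ is a set of projective generators for ${^\mathscr C}Ctr$.
   Context: $K$ is a field; $(U',U):=Hom_K(U',U)$. A coalgebra $\mathscr C$ with several objects has a set $Ob(\mathscr C)$, vector spaces $\mathscr C(X,Y)$, and coassociative, counital maps $\delta_{XYZ}:\mathscr C(X,Z)\to \mathscr C(Y,Z)\otimes \mathscr C(X,Y)$, $\epsilon_X:\mathscr C(X,X)\to K$. ${^\mathscr C}Ctr$ is the category of left $\mathscr C$-contramodules: families of vector spaces $\mathcal M(X)$ with maps $\pi_{XY}:(\mathscr C(X,Y),\mathcal M(Y))\to\mathcal M(X)$ satisfying $\pi_{XZ}\circ(\delta_{XYZ},\mathcal M(Z))=\pi_{XY}\circ(\mathscr C(X,Y),\pi_{YZ})$ (via the hom-tensor identification) and $\pi_{XX}\circ(\epsilon_X,\mathcal M(X))=id$; morphisms are families of linear maps compatible with the $\pi$'s. It is abelian with kernels and cokernels computed objectwise. $\mathcal H_X^*$ denotes the contramodule $Y\mapsto (\mathscr C(Y,X),K)$ with structure maps induced by $(\delta_{YZX},K)$. *)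

(* Defs.v *)
From HB Require Import structures.
From mathcomp Require Import all_boot all_algebra.
From mathcomp Require Import boolp classical_sets functions.
Unset Printing Implicit Defensive.
Import GRing.Theory.
Local Open Scope ring_scope.

Definition linmap {K : fieldType} {U V : lmodType K} (f : U -> V) : Prop :=
  forall (a : K) (u v : U), f (a *: u + v) = a *: f u + f v.

(** The dual space (V, K) = Hom_K(V, K), as a sub-vector-space of V -> K. *)
Section Dual.
Variables (K : fieldType) (V : lmodType K).

Definition linb : {pred V -> K^o} := fun f => `[< linmap f >].

Lemma linb_submod_closed : submod_closed linb.
Proof.
split.
  apply/asboolP => a u v /=; by rewrite scaler0 addr0.
move=> a f g /asboolP Hf /asboolP Hg; apply/asboolP => b u v /=.
rewrite !fctE Hf Hg !scalerDr !scalerA mulrC !addrA.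
by congr (_ + _); rewrite -!addrA; congr (_ + _); rewrite addrC.
Qed.

HB.instance Definition _ :=
  GRing.isSubmodClosed.Build K (V -> K^o) linb linb_submod_closed.

Record dualsp := Dualsp { dfun :> V -> K^o; _ : dfun \in linb }.
HB.instance Definition _ := [isSub for dfun].
HB.instance Definition _ := [Choice of dualsp by <:].
HB.instance Definition _ := [SubChoice_isSubLmodule of dualsp by <:].

(** a function into K, packaged as an element of the dual space when it is
    linear (and 0 otherwise; only used on linear functions). *)
Definition to_dual (f : V -> K^o) : dualsp := insubd 0 f.
End Dual.
Arguments dualsp {K}.
Arguments to_dual {K V}.
Arguments linb {K}.

(** Elements of a tensor product C(Y,Z) ⊗ C(X,Y) are represented by finite
    lists of pairs (sums of pure tensors); two such representatives denote the
    same tensor iff they agree under every f ⊗ g with f, g linear functionals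
    (over a field the pure functionals separate the points of a tensor product). *)
Record coalg_data (K : fieldType) := CoalgData {
  cObj : Type;
  cHom : cObj -> cObj -> lmodType K;
  cdelta : forall X Y Z, cHom X Z -> seq (cHom Y Z * cHom X Y);
  ceps : forall X, cHom X X -> K^o
}.
Arguments cObj {K}.
Arguments cHom {K}.
Arguments cdelta {K}.
Arguments ceps {K}.

Section Coalg.
Variables (K : fieldType) (C : coalg_data K).
Local Notation Ob := (cObj C).
Local Notation H := (@cHom K C).
Local Notation δ := (@cdelta K C).
Local Notation ε := (@ceps K C).

Definition tev2 {A B : lmodType K} (s : seq (A * B)) (f : A -> K^o) (g : B -> K^o) : K :=
  \sum_(p <- s) f p.1 * g p.2.

Definition is_coalg : Prop :=
  (forall X, linmap (ε X)) /\
  (* δ_XYZ is linear (as a map into the tensor product) *)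
  (forall X Y Z (f : H Y Z -> K^o) (g : H X Y -> K^o), linmap f -> linmap g ->
     forall (a : K) (c c' : H X Z),
       tev2 (δ X Y Z (a *: c + c')) f g
       = a * tev2 (δ X Y Z c) f g + tev2 (δ X Y Z c') f g) /\
  (* coassociativity: (δ_YWZ ⊗ id) δ_XYZ = (id ⊗ δ_XYW) δ_XWZ
     in C(W,Z) ⊗ C(Y,W) ⊗ C(X,Y) *)
  (forall X Y W Z (f : H W Z -> K^o) (g : H Y W -> K^o) (h : H X Y -> K^o),
     linmap f -> linmap g -> linmap h -> forall c : H X Z,
       \sum_(p <- δ X Y Z c) tev2 (δ Y W Z p.1) f g * h p.2
       = \sum_(p <- δ X W Z c) f p.1 * tev2 (δ X Y W p.2) g h) /\
  (forall X Y (c : H X Y), \sum_(p <- δ X Y Y c) ε Y p.1 *: p.2 = c) /\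
  (forall X Y (c : H X Y), \sum_(p <- δ X X Y c) ε X p.2 *: p.1 = c).

(** ** Left C-contramodules.
    ctr_pi X Y : (C(X,Y), M(Y)) -> M(X); its argument is given as a function
    and is only ever used on linear ones. *)
Record ctr_data := CtrData {
  ctr_M : Ob -> lmodType K;
  ctr_pi : forall X Y, (H X Y -> ctr_M Y) -> ctr_M X
}.

Definition is_ctr (M : ctr_data) : Prop :=
  (forall X Y (phi psi : H X Y -> ctr_M M Y) (a : K),
     linmap phi -> linmap psi ->
     ctr_pi M X Y (fun c => a *: phi c + psi c) = a *: ctr_pi M X Y phi + ctr_pi M X Y psi) /\
  (* contra-associativity: π_XZ ∘ (δ_XYZ, M(Z)) = π_XY ∘ (C(X,Y), π_YZ),
     where phi ∈ (C(X,Y), (C(Y,Z), M(Z))) ≅ (C(Y,Z) ⊗ C(X,Y), M(Z)) *)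
  (forall X Y Z (phi : H X Y -> H Y Z -> ctr_M M Z),
     (forall b, linmap (phi b)) ->
     (forall (a : K) b b' c, phi (a *: b + b') c = a *: phi b c + phi b' c) ->
     ctr_pi M X Z (fun c : H X Z => \sum_(p <- δ X Y Z c) phi p.2 p.1)
     = ctr_pi M X Y (fun b : H X Y => ctr_pi M Y Z (phi b))) /\
  (forall X (m : ctr_M M X), ctr_pi M X X (fun c : H X X => ε X c *: m) = m).

Definition is_ctr_morph {M N : ctr_data}
    (f : forall X, ctr_M M X -> ctr_M N X) : Prop :=
  (forall X, linmap (f X)) /\
  (forall X Y (phi : H X Y -> ctr_M M Y), linmap phi ->
     f X (ctr_pi M X Y phi) = ctr_pi N X Y (fun c => f Y (phi c))).

(** Projective object of ^C Ctr: lifting along epimorphisms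
    (epimorphisms of ^C Ctr are the objectwise surjective morphisms,
    cokernels being computed objectwise). *)
Definition ctr_projective (P : ctr_data) : Prop :=
  forall (M N : ctr_data) (g : forall X, ctr_M M X -> ctr_M N X)
         (f : forall X, ctr_M P X -> ctr_M N X),
    is_ctr M -> is_ctr N ->
    is_ctr_morph g -> (forall X, forall y : ctr_M N X, exists x : ctr_M M X, g X x = y) -> is_ctr_morph f ->
    exists h : forall X, ctr_M P X -> ctr_M M X,
      is_ctr_morph h /\ forall X (x : ctr_M P X), g X (h X x) = f X x.

Definition ctr_generators (I : Type) (G : I -> ctr_data) : Prop :=
  forall (M N : ctr_data) (u v : forall X, ctr_M M X -> ctr_M N X),
    is_ctr M -> is_ctr N -> is_ctr_morph u -> is_ctr_morph v ->
    (forall (i : I) (h : forall X, ctr_M (G i) X -> ctr_M M X),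
        is_ctr_morph h -> forall X (x : ctr_M (G i) X), u X (h X x) = v X (h X x)) ->
    forall X (m : ctr_M M X), u X m = v X m.

(** The contramodule H_X^* : Y |-> (C(Y,X), K), with structure maps
    (C(Y,Z), (C(Z,X),K)) ≅ (C(Z,X) ⊗ C(Y,Z), K) --(δ_YZX, K)--> (C(Y,X), K). *)
Definition Hstar_pi (X : Ob) (Y Z : Ob)
    (phi : H Y Z -> dualsp (H Z X)) : dualsp (H Y X) :=
  to_dual (fun c : H Y X => \sum_(p <- δ Y Z X c) (phi p.2 : H Z X -> K^o) p.1).

Definition Hstar (X : Ob) : ctr_data :=
  @CtrData (fun Y => dualsp (H Y X)) (fun Y Z phi => Hstar_pi X Y Z phi).

End Coalg.

(* Main.v *)
Require Import Defs.
From HB Require Import structures.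
From mathcomp Require Import all_boot all_algebra boolp classical_sets functions.
From mathcomp Require Import ring.
Import GRing.Theory.
Local Open Scope ring_scope.

Section Lin.
Variable K : fieldType.

Section L1.
Variables (U W : lmodType K) (f : U -> W) (hf : linmap f).
Lemma lin0 : f 0 = 0.
Proof.
have h := hf 1 0 0; rewrite scaler0 addr0 scale1r in h.
have : f 0 + f 0 = f 0 + 0 by rewrite addr0 -h.
by move/addrI.
Qed.
Lemma linZ a u : f (a *: u) = a *: f u.
Proof. by have := hf a u 0; rewrite !addr0 lin0 addr0. Qed.
Lemma linD u v : f (u + v) = f u + f v.
Proof. by have := hf 1 u v; rewrite !scale1r. Qed.
Lemma linN u : f (- u) = - f u.
Proof. by rewrite -scaleN1r linZ scaleN1r. Qed.
Lemma lin_sum (I : Type) (r : seq I) (F : I -> U) :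
  f (\sum_(i <- r) F i) = \sum_(i <- r) f (F i).
Proof.
elim: r => [|x r IH]; first by rewrite !big_nil lin0.
by rewrite !big_cons linD IH.
Qed.
End L1.
Arguments lin0 {U W f}.
Arguments linZ {U W f}.
Arguments linD {U W f}.
Arguments linN {U W f}.
Arguments lin_sum {U W f}.

Lemma count_lt (T : eqType) (a a' : pred T) (s : seq T) :
  (forall x, a' x -> a x) -> (exists2 x, x \in s & a x && ~~ a' x) ->
  (count a' s < count a s)%N.
Proof.
move=> sub [x xs hx].
elim: s xs => [//|y s IH]; rewrite in_cons => /orP [/eqP <-|xs] /=.
  case/andP: hx => -> /negbTE ->; rewrite add0n add1n ltnS.
  by apply: sub_count.
have := IH xs.
case ha': (a' y); first by rewrite (sub _ ha') !add1n ltnS.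
rewrite add0n => h; apply: (leq_trans h); exact: leq_addl.
Qed.

Lemma sep0 (U V : lmodType K) (L : seq (U * V)) (B : U -> V -> K^o) :
  (forall u, linmap (B u)) -> (forall v, linmap (fun u => B u v)) ->
  (forall (f : U -> K^o) (g : V -> K^o), linmap f -> linmap g ->
      \sum_(p <- L) f p.1 * g p.2 = 0) ->
  \sum_(p <- L) B p.1 p.2 = 0.
Proof.
move=> + + hL.
move: {2}(count _ L) (leqnn (count (fun p => has (fun q => B p.1 q.2 != 0) L) L)) => n.
elim: n B => [|n IH] B hn hB1 hB2.
  rewrite big_seq big1 // => p pL.
  rewrite leqn0 -(negbK (_ == _)) -lt0n -has_count in hn.
  have := hn; move/hasPn/(_ p pL)/hasPn/(_ p pL).
  by rewrite negbK => /eqP.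
case: (boolP (has (fun p => has (fun q => B p.1 q.2 != 0) L) L)); last first.
  move=> hn'; rewrite big_seq big1 // => p pL.
  have := hn'; move/hasPn/(_ p pL)/hasPn/(_ p pL).
  by rewrite negbK => /eqP.
case/hasP=> p0 p0L /hasP [q0 q0L hw].
set w := B p0.1 q0.2 in hw.
pose B' u v := B u v - B u q0.2 * B p0.1 v / w.
have hf : linmap (fun u => B u q0.2 / w : K^o).
  by move=> a u v; rewrite (hB2 q0.2) /= /GRing.scale /= mulrDl mulrA.
have hB : \sum_(p <- L) B p.1 p.2 = \sum_(p <- L) B' p.1 p.2 +
    \sum_(p <- L) (B p.1 q0.2 / w) * B p0.1 p.2.
  rewrite -big_split /=; apply: eq_bigr => p _; rewrite /B'.
  by rewrite mulrAC subrK.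
rewrite hB (hL _ _ hf (hB1 p0.1)) addr0.
apply: IH.
- rewrite -ltnS; apply: leq_trans hn; apply: count_lt.
    move=> p; apply: contraLR => /= /hasPn hp.
    apply/hasPn => q qL; rewrite negbK /B'.
    have := hp q qL; have := hp q0 q0L; rewrite !negbK => /eqP -> /eqP ->.
    by rewrite !mul0r subr0.
  exists p0 => //; apply/andP; split; first by apply/hasP; exists q0.
  apply/hasPn => q _; rewrite negbK /B' -/w.
  by rewrite mulrAC divff // mul1r subrr.
- move=> u a v v'; rewrite /B' /= (hB1 u) (hB1 p0.1) /GRing.scale /=.
  by ring.
- move=> v a u u'; rewrite /B' /= (hB2 v) (hB2 q0.2) /GRing.scale /=.
  by ring.
Qed.

Lemma sep2 (U V : lmodType K) (L1 L2 : seq (U * V)) (B : U -> V -> K^o) :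
  (forall u, linmap (B u)) -> (forall v, linmap (fun u => B u v)) ->
  (forall (f : U -> K^o) (g : V -> K^o), linmap f -> linmap g ->
      \sum_(p <- L1) f p.1 * g p.2 = \sum_(p <- L2) f p.1 * g p.2) ->
  \sum_(p <- L1) B p.1 p.2 = \sum_(p <- L2) B p.1 p.2.
Proof.
move=> hB1 hB2 hL.
have hN : forall (f : U -> K^o) (g : V -> K^o), linmap f ->
   \sum_(p <- L2) f (- p.1) * g p.2 = - \sum_(p <- L2) f p.1 * g p.2.
  move=> f g hf; rewrite -sumrN; apply: eq_bigr => p _.
  by rewrite (linN hf) mulNr.
have H0 : \sum_(p <- L1 ++ map (fun p => (- p.1, p.2)) L2) B p.1 p.2 = 0.
  apply: sep0 => // f g hf hg.
  by rewrite big_cat big_map /= hN // hL // subrr.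
move: H0; rewrite big_cat big_map /=.
have -> : \sum_(p <- L2) B (- p.1) p.2 = - \sum_(p <- L2) B p.1 p.2.
  by rewrite -sumrN; apply: eq_bigr => p _; rewrite (linN (hB2 _)).
by move/eqP; rewrite subr_eq0 => /eqP.
Qed.

Section Dual.
Variable V : lmodType K.
Lemma dualE (F : V -> K^o) : linmap F -> forall v, to_dual F v = F v.
Proof. by move=> hF v; rewrite /to_dual insubdK // unfold_in; apply/asboolP. Qed.
Lemma dual_lin (d : dualsp V) : linmap d.
Proof. by case: d => f hf /=; move: hf; rewrite unfold_in => /asboolP. Qed.
Lemma dual_ext (d e : dualsp V) : (forall v, d v = e v) -> d = e.
Proof. by move=> h; apply: val_inj; apply: funext. Qed.
Lemma dualDE (d e : dualsp V) v : (d + e) v = d v + e v.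
Proof. by change (val (d + e) v = val d v + val e v); rewrite raddfD. Qed.
Lemma dualZE a (d : dualsp V) v : (a *: d) v = a * d v.
Proof. by change (val (a *: d) v = a * val d v); rewrite linearZ. Qed.
Lemma dual_sumE (I : Type) (r : seq I) (F : I -> dualsp V) v :
  (\sum_(i <- r) F i) v = \sum_(i <- r) F i v.
Proof.
change (val (\sum_(i <- r) F i) v = \sum_(i <- r) val (F i) v).
by rewrite raddf_sum fct_sumE.
Qed.
Lemma dual_linF (U : lmodType K) (F : U -> dualsp V) :
  (forall x, linmap (fun c => F c x : K^o)) -> linmap F.
Proof.
by move=> h a c c'; apply: dual_ext => x; rewrite dualDE dualZE h.
Qed.
End Dual.

Lemma lin_scal (U W : lmodType K) (psi : U -> K^o) (m : W) :
  linmap psi -> linmap (fun c => psi c *: m).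
Proof. by move=> h a u v; rewrite h scalerDl scalerA. Qed.

Lemma lin_comb (U W : lmodType K) (phi psi : U -> W) a :
  linmap phi -> linmap psi -> linmap (fun c => a *: phi c + psi c).
Proof.
move=> h1 h2 b u v; rewrite h1 h2 !scalerDr !scalerA [b * a]mulrC.
by rewrite addrACA.
Qed.
End Lin.

Arguments lin0 {K U W f}.
Arguments linZ {K U W f}.
Arguments linD {K U W f}.
Arguments linN {K U W f}.
Arguments lin_sum {K U W f}.

Section Co.
Variables (K : fieldType) (C : coalg_data K).
Hypothesis hc : is_coalg K C.
Local Notation H := (@cHom K C).
Local Notation δ := (@cdelta K C).
Local Notation ε := (@ceps K C).

Lemma delta_lin Y W Z (B : H W Z -> H Y W -> K^o) :
  (forall u, linmap (B u)) -> (forall v, linmap (fun u => B u v)) ->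
  linmap (fun c : H Y Z => \sum_(p <- δ Y W Z c) B p.1 p.2 : K^o).
Proof.
case: hc => _ [hdel _] hB1 hB2 a c c'.
rewrite (@sep2 _ _ _ _ (map (fun p => (a *: p.1, p.2)) (δ Y W Z c) ++ δ Y W Z c') _ hB1 hB2).
  rewrite big_cat big_map /= /GRing.scale /= mulr_sumr; congr (_ + _).
  by apply: eq_bigr => p _; rewrite (linZ (hB2 _)).
move=> f g hf hg.
have := hdel Y W Z f g hf hg a c c'; rewrite /tev2 => ->.
rewrite big_cat big_map /= mulr_sumr; congr (_ + _).
by apply: eq_bigr => p _; rewrite (linZ hf) mulrA.
Qed.

Lemma HstarE X Y Z (Phi : H Y Z -> dualsp (H Z X)) : linmap Phi ->
  forall d, Hstar_pi K C X Y Z Phi d = \sum_(q <- δ Y Z X d) Phi q.2 q.1.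
Proof.
move=> hP d; rewrite /Hstar_pi dualE //.
apply: (@delta_lin Y Z X (fun x y => Phi y x)).
  by move=> x a y y'; rewrite hP dualDE dualZE.
by move=> y; apply: dual_lin.
Qed.

Lemma coas_bil Y W Z X (f : H Z X -> K^o) (R : H W Z -> H Y W -> K^o) :
  linmap f -> (forall u, linmap (R u)) -> (forall v, linmap (fun u => R u v)) ->
  forall d,
  \sum_(q <- δ Y W X d) \sum_(r <- δ W Z X q.1) f r.1 * R r.2 q.2
  = \sum_(p <- δ Y Z X d) \sum_(s <- δ Y W Z p.2) f p.1 * R s.1 s.2.
Proof.
case: hc => _ [_ [hcoas _]] hf hR1 hR2 d.
have E1 := @sep2 K _ _
  (flatten (map (fun q => map (fun r => (f r.1 *: r.2, q.2)) (δ W Z X q.1)) (δ Y W X d)))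
  (flatten (map (fun p => map (fun s => (f p.1 *: s.1, s.2)) (δ Y W Z p.2)) (δ Y Z X d)))
  R hR1 hR2.
rewrite !big_flatten !big_map /= in E1.
have -> : \sum_(q <- δ Y W X d) \sum_(r <- δ W Z X q.1) f r.1 * R r.2 q.2 =
   \sum_(q <- δ Y W X d) \sum_(r <- δ W Z X q.1) R (f r.1 *: r.2) q.2.
  apply: eq_bigr => q _; apply: eq_bigr => r _.
  by rewrite (linZ (hR2 _)).
have -> : \sum_(p <- δ Y Z X d) \sum_(s <- δ Y W Z p.2) f p.1 * R s.1 s.2 =
   \sum_(p <- δ Y Z X d) \sum_(s <- δ Y W Z p.2) R (f p.1 *: s.1) s.2.
  apply: eq_bigr => q _; apply: eq_bigr => r _.
  by rewrite (linZ (hR2 _)).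
move: E1; rewrite !(eq_bigr _ (fun i _ => big_map _ _ _)) /= => ->//.
move=> f0 g hf0 hg; rewrite !big_flatten !big_map /=.
have E := hcoas Y W Z X f f0 g hf hf0 hg d; rewrite /tev2 in E.
transitivity (\sum_(q <- δ Y W X d) (\sum_(r <- δ W Z X q.1) f r.1 * f0 r.2) * g q.2).
  apply: eq_bigr => q _; rewrite big_map mulr_suml; apply: eq_bigr => r _.
  by rewrite (linZ hf0).
rewrite E; apply: eq_bigr => p _; rewrite big_map mulr_sumr; apply: eq_bigr => s _.
by rewrite (linZ hf0) /GRing.scale /= mulrA.
Qed.

Lemma coas_tri Y W Z X (phi : H Y W -> H W Z -> dualsp (H Z X)) :
  (forall b, linmap (phi b)) ->
  (forall a b b' c, phi (a *: b + b') c = a *: phi b c + phi b' c) ->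
  forall d, \sum_(q <- δ Y W X d) \sum_(r <- δ W Z X q.1) phi q.2 r.2 r.1
   = \sum_(p <- δ Y Z X d) \sum_(s <- δ Y W Z p.2) phi s.2 s.1 p.1.
Proof.
move=> hb hl d.
have hB1 : forall x : H Z X, linmap (fun D : dualsp (H Z X) => D x : K^o).
  by move=> x a D D'; rewrite dualDE dualZE.
have hB2 : forall D : dualsp (H Z X), linmap (fun x => D x : K^o).
  by move=> D; apply: dual_lin.
have E1 := @sep2 K (H Z X) (dualsp (H Z X))
  (flatten (map (fun q => map (fun r => (r.1, phi q.2 r.2)) (δ W Z X q.1)) (δ Y W X d)))
  (flatten (map (fun p => map (fun s => (p.1, phi s.2 s.1)) (δ Y W Z p.2)) (δ Y Z X d)))
  (fun x D => D x) hB1 hB2.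
move: E1; rewrite !big_flatten !big_map /=.
rewrite !(eq_bigr _ (fun i _ => big_map _ _ _)) /= => ->// f g hf hg.
rewrite !big_flatten !big_map /=.
rewrite !(eq_bigr _ (fun i _ => big_map _ _ _)) /=.
apply: (@coas_bil Y W Z X f (fun y z => g (phi z y))) => //.
  by move=> u a z z'; rewrite hl (linD hg) (linZ hg).
by move=> v a u u'; rewrite (hb v) (linD hg) (linZ hg).
Qed.

Lemma Hstar_lin X Y Z (phi psi : H Y Z -> dualsp (H Z X)) (a : K) :
  linmap phi -> linmap psi ->
  Hstar_pi K C X Y Z (fun c => a *: phi c + psi c) =
  a *: Hstar_pi K C X Y Z phi + Hstar_pi K C X Y Z psi.
Proof.
move=> hphi hpsi.
apply: dual_ext => d; rewrite dualDE dualZE !HstarE //; last exact: lin_comb.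
rewrite mulr_sumr -big_split; apply: eq_bigr => q _.
by rewrite dualDE dualZE.
Qed.

Lemma Hstar_assoc X Y W Z (phi : H Y W -> H W Z -> dualsp (H Z X)) :
  (forall b, linmap (phi b)) ->
  (forall a b b' c, phi (a *: b + b') c = a *: phi b c + phi b' c) ->
  Hstar_pi K C X Y Z (fun c => \sum_(p <- δ Y W Z c) phi p.2 p.1) =
  Hstar_pi K C X Y W (fun b => Hstar_pi K C X W Z (phi b)).
Proof.
move=> hb hl.
have l1 : linmap (fun c => \sum_(p <- δ Y W Z c) phi p.2 p.1).
  apply: dual_linF => x.
  have -> : (fun c => (\sum_(p <- δ Y W Z c) phi p.2 p.1) x : K^o) =
            (fun c => \sum_(p <- δ Y W Z c) phi p.2 p.1 x).
    by apply: funext => c; rewrite dual_sumE.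
  apply: (@delta_lin Y W Z (fun y z => phi z y x)).
    by move=> y a z z'; rewrite hl dualDE dualZE.
  by move=> z a y y'; rewrite (hb z) dualDE dualZE.
have l2 : linmap (fun b => Hstar_pi K C X W Z (phi b)).
  apply: dual_linF => e.
  have -> : (fun b => Hstar_pi K C X W Z (phi b) e : K^o) =
            (fun b => \sum_(r <- δ W Z X e) phi b r.2 r.1).
    by apply: funext => b; rewrite HstarE.
  move=> a b b'; rewrite /GRing.scale /= mulr_sumr -big_split /=.
  by apply: eq_bigr => r _; rewrite hl dualDE dualZE.
apply: dual_ext => d; rewrite !HstarE //.
transitivity (\sum_(q <- δ Y Z X d) \sum_(p <- δ Y W Z q.2) phi p.2 p.1 q.1).
  by apply: eq_bigr => q _; rewrite dual_sumE.
transitivity (\sum_(q <- δ Y W X d) \sum_(r <- δ W Z X q.1) phi q.2 r.2 r.1); last first.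
  by apply: eq_bigr => q _; rewrite HstarE.
by rewrite coas_tri.
Qed.

Lemma Hstar_unit X Y (m : dualsp (H Y X)) :
  Hstar_pi K C X Y Y (fun c => (ε Y c : K) *: m) = m.
Proof.
case: hc => heps [_ [_ [hcu1 hcu2]]].
apply: dual_ext => d; rewrite HstarE; last first.
  by move=> a u v; rewrite heps scalerDl scalerA.
transitivity (m (\sum_(q <- δ Y Y X d) ε Y q.2 *: q.1)); last by rewrite hcu2.
rewrite (lin_sum (@dual_lin _ _ m)); apply: eq_bigr => q _.
by rewrite dualZE (linZ (@dual_lin _ _ m)).
Qed.

Lemma Hstar_ctr X : is_ctr K C (Hstar K C X).
Proof.
split; [|split].
- move=> Y Z phi psi a hphi hpsi; exact: Hstar_lin.
- move=> Y W Z phi hb hl; exact: Hstar_assoc.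
- move=> Y m; exact: Hstar_unit.
Qed.

Section Free.
Variables (M : ctr_data K C) (hM : is_ctr K C M) (X : cObj C) (m : ctr_M K C M X).

Definition fm Y (psi : dualsp (H Y X)) : ctr_M K C M Y :=
  ctr_pi K C M Y X (fun c => (psi c : K) *: m).

Lemma fm_lin Y : linmap (@fm Y).
Proof.
case: hM => hlin _ a psi psi'; rewrite /fm -hlin; last 2 first.
- exact: lin_scal (@dual_lin _ _ psi).
- exact: lin_scal (@dual_lin _ _ psi').
congr ctr_pi; apply: funext => c.
by rewrite dualDE dualZE scalerDl scalerA.
Qed.

Lemma fm_comm Y Z (Phi : H Y Z -> dualsp (H Z X)) : linmap Phi ->
  fm Y (Hstar_pi K C X Y Z Phi) = ctr_pi K C M Y Z (fun c => fm Z (Phi c)).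
Proof.
case: hM => _ [hass _] hP; rewrite /fm.
rewrite -(hass Y Z X (fun b e => (Phi b e : K) *: m)); last 2 first.
- by move=> b; exact: lin_scal (@dual_lin _ _ (Phi b)).
- by move=> a b b' c; rewrite hP dualDE dualZE scalerDl scalerA.
congr ctr_pi; apply: funext => d.
by rewrite HstarE // scaler_suml.
Qed.

Lemma fm_morph : @is_ctr_morph K C (Hstar K C X) M fm.
Proof.
split; first by move=> Y; exact: fm_lin.
by move=> Y Z Phi hP; exact: fm_comm.
Qed.
End Free.

End Co.

Theorem proposition3p4 (K : fieldType) (C : coalg_data K) :
  is_coalg K C ->
  (forall X : cObj C, is_ctr K C (Hstar K C X)) /\
  (forall X : cObj C, ctr_projective K C (Hstar K C X)) /\
  ctr_generators K C (cObj C) (Hstar K C).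
Proof.
move=> hc; split; first exact: Hstar_ctr.
split.
- move=> X M N g f hM hN hg hsurj hf.
  pose e := to_dual (@ceps K C X).
  have [m hm] := hsurj X (f X e).
  exists (@fm K C M X m); split; first exact: (@fm_morph K C hc M hM X m).
  move=> Y psi; rewrite /fm.
  have lp : linmap (fun c => (psi c : K) *: m).
    exact: lin_scal (@dual_lin _ _ psi).
  transitivity (ctr_pi K C N Y X (fun c => (psi c : K) *: f X e)).
    rewrite (proj2 hg Y X _ lp); congr ctr_pi; apply: funext => c.
    by rewrite (linZ (proj1 hg X)) hm.
  case: (hc) => heps [_ [_ [hcu1 hcu2]]].
  have le : linmap (fun c => (psi c : K) *: e).
    exact: lin_scal (@dual_lin _ _ psi).
  have hpsi : psi = Hstar_pi K C X Y X (fun c => (psi c : K) *: e).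
    apply: dual_ext => d; rewrite HstarE //.
    transitivity ((psi : cHom C Y X -> K^o) (\sum_(q <- cdelta C Y X X d) ceps C X q.1 *: q.2)).
      by rewrite hcu1.
    rewrite (lin_sum (@dual_lin _ _ psi)); apply: eq_bigr => q _.
    by rewrite dualZE (linZ (@dual_lin _ _ psi)) dualE // mulrC.
  rewrite [in RHS]hpsi.
  have := proj2 hf Y X _ le; rewrite /= => ->.
  congr ctr_pi; apply: funext => c.
  by rewrite (linZ (proj1 hf X)).
- move=> M N u v hM hN hu hv huv X m.
  have hm : @fm K C M X m X (to_dual (@ceps K C X)) = m.
    case: hM => _ [_ hun]; rewrite /fm -[RHS]hun; congr ctr_pi.
    apply: funext => c; rewrite dualE //.
    by case: hc.
  rewrite -hm; apply: (huv X (@fm K C M X m) (@fm_morph K C hc M hM X m)).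
Qed.
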